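(* Consider decorated ideal hyperbolic triangles, parametrized by their generalized edge lengths $(l_1,l_2,l_3)\in\mathbb{R}^3$, with generalized angles $\theta_1,\theta_2,\theta_3$ ($\theta_i$ opposite the edge of length $l_i$), and set $x_i=\frac12(\theta_j+\theta_k-\theta_i)$ for $\{i,j,k\}=\{1,2,3\}$. Then the differential $1$-form $\omega=\sum_{i=1}^3 x_i\,dl_i$ is closed on $\mathbb{R}^3$, its integral $W(l)=\int_0^l\omega$ is a smooth strictly concave function on $\mathbb{R}^3$ (with negative definite Hessian), and $\partial W/\partial l_i=x_i$.
   Context: A decorated ideal triangle is an ideal hyperbolic triangle with a horodisk chosen at each of its three ideal vertices. The generalized angle $\theta_i$ at a vertex is twice the length of the arc of the chosen horocycle lying inside the triangle. The generalized length of an edge joining vertices $u,v$ with horodisks $B_u,B_v$ is the distance between $B_u$ and $B_v$ if they are disjoint, and minus the distance between the two points $\partial B_u\cap e$, $\partial B_v\cap e$ otherwise. Every $(l_1,l_2,l_3)\in\mathbb{R}^3$ is realized by a unique decorated ideal triangle up to isometry, and the angles and lengths satisfy $\frac{e^{l_i}}{2}=\frac{2}{\theta_j\theta_k}$ for $\{i,j,k\}=\{1,2,3\}$. *)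

(* Defs.v *)
From Stdlib Require Import Reals Lra ClassicalEpsilon.
Open Scope R_scope.

Inductive ix : Type := I1 | I2 | I3.

Definition ix_eqb (i j : ix) : bool :=
  match i, j with I1, I1 | I2, I2 | I3, I3 => true | _, _ => false end.

(* For i, (nxt i, prv i) = the other two indices j, k. *)
Definition nxt (i : ix) : ix := match i with I1 => I2 | I2 => I3 | I3 => I1 end.
Definition prv (i : ix) : ix := match i with I1 => I3 | I2 => I1 | I3 => I2 end.

Definition pt := ix -> R.

Definition sum3 (f : ix -> R) : R := f I1 + f I2 + f I3.

Definition upd (p : pt) (i : ix) (t : R) : pt :=
  fun j => if ix_eqb j i then t else p j.

Definition has_partial (f : pt -> R) (i : ix) (l : pt) (d : R) : Prop :=
  derivable_pt_lim (fun t => f (upd l i t)) (l i) d.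

Definition dist3 (p q : pt) : R :=
  Rmax (Rabs (p I1 - q I1)) (Rmax (Rabs (p I2 - q I2)) (Rabs (p I3 - q I3))).

Definition continuous3 (f : pt -> R) : Prop :=
  forall l eps, 0 < eps -> exists delta, 0 < delta /\
    forall l', dist3 l l' < delta -> Rabs (f l' - f l) < eps.

Fixpoint Ck (n : nat) (f : pt -> R) : Prop :=
  continuous3 f /\
  match n with
  | O => True
  | S m => forall i, exists g : pt -> R,
             (forall l, has_partial f i l (g l)) /\ Ck m g
  end.

Definition smooth3 (f : pt -> R) : Prop := forall n, Ck n f.

Definition strictly_concave3 (f : pt -> R) : Prop :=
  forall (p q : pt) (t : R), (exists i, p i <> q i) -> 0 < t < 1 ->
    (1 - t) * f p + t * f q < f (fun i => (1 - t) * p i + t * q i).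

(* Riemann integral over [0,1]; defined as 0 when f is not integrable. *)
Definition RInt01 (f : R -> R) : R :=
  match excluded_middle_informative (inhabited (Riemann_integrable f 0 1)) with
  | left H => RiemannInt (epsilon H (fun _ => True))
  | right _ => 0
  end.

(* Given the angle functions theta (theta l i = generalized angle at vertex i
   of the decorated ideal triangle with generalized lengths l),
   x_i = (theta_j + theta_k - theta_i)/2. *)
Definition xcoef (theta : pt -> ix -> R) (l : pt) (i : ix) : R :=
  (theta l (nxt i) + theta l (prv i) - theta l i) / 2.

Definition omega_seg (theta : pt -> ix -> R) (l : pt) (t : R) : R :=
  sum3 (fun i => xcoef theta (fun j => t * l j) i * l i).

(* W(l) = int_0^l omega, along the straight segment from 0 to l. *)
Definition Wfun (theta : pt -> ix -> R) (l : pt) : R :=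
  RInt01 (omega_seg theta l).

(* Main.v *)
Require Import Defs.
From Stdlib Require Import Reals.
From Stdlib Require Import Lra Psatz FunctionalExtensionality ClassicalEpsilon.
Open Scope R_scope.

Definition aa (l : pt) (i : ix) : R := (l i - l (nxt i) - l (prv i)) / 2.
Definition EE (l : pt) (i : ix) : R := exp (aa l i).
Definition sg (m j : ix) : R := if ix_eqb m j then 1 else -1.

Lemma EE_pos l i : 0 < EE l i.
Proof. apply exp_pos. Qed.

Lemma pair_eq (theta : pt -> ix -> R)
  (Hpos : forall l i, 0 < theta l i)
  (Hrel : forall l i,
     exp (l i) / 2 = 2 / (theta l (nxt i) * theta l (prv i))) l i :
  theta l (nxt i) * theta l (prv i) = 4 * (EE l (nxt i) * EE l (prv i)).
Proof.
  assert (hx : EE l (nxt i) * EE l (prv i) * exp (l i) = 1).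
  { unfold EE; rewrite <- !exp_plus.
    replace (aa l (nxt i) + aa l (prv i) + l i) with 0
      by (destruct i; unfold aa; simpl; lra).
    apply exp_0. }
  set (P := theta l (nxt i) * theta l (prv i)) in *.
  assert (HP : 0 < P) by (unfold P; apply Rmult_lt_0_compat; apply Hpos).
  assert (H4 : P * exp (l i) = 4).
  { replace (P * exp (l i)) with (2 * P * (exp (l i) / 2)) by field.
    rewrite Hrel. fold P. field. lra. }
  transitivity (P * (EE l (nxt i) * EE l (prv i) * exp (l i))).
  - rewrite hx; ring.
  - replace (P * (EE l (nxt i) * EE l (prv i) * exp (l i))) with
      ((P * exp (l i)) * (EE l (nxt i) * EE l (prv i))) by ring.
    rewrite H4; ring.
Qed.

Lemma solve3 t1 t2 t3 e1 e2 e3 : 0 < t1 -> 0 < t2 -> 0 < t3 -> 0 < e1 ->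
  t1 * t2 = 4 * (e1 * e2) -> t3 * t1 = 4 * (e3 * e1) -> t2 * t3 = 4 * (e2 * e3) ->
  t1 = 2 * e1.
Proof.
  intros h1 h2 h3 he A B C.
  assert (Hsq : t1 * t1 = 4 * (e1 * e1)).
  { apply Rmult_eq_reg_r with (t2 * t3); [| nra].
    transitivity ((t1 * t2) * (t3 * t1)); [ring|].
    rewrite A, B. transitivity (4 * (e1*e1) * (4 * (e2 * e3))); [ring|].
    rewrite <- C. ring. }
  assert (Hz : (t1 - 2 * e1) * (t1 + 2 * e1) = 0) by (rewrite <- (Rminus_diag_eq (t1*t1) (4*(e1*e1)) Hsq); ring).
  destruct (Rmult_integral _ _ Hz); lra.
Qed.

Lemma theta_eq (theta : pt -> ix -> R)
  (Hpos : forall l i, 0 < theta l i)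
  (Hrel : forall l i,
     exp (l i) / 2 = 2 / (theta l (nxt i) * theta l (prv i))) l i :
  theta l i = 2 * EE l i.
Proof.
  pose proof (pair_eq theta Hpos Hrel l I1) as P1.
  pose proof (pair_eq theta Hpos Hrel l I2) as P2.
  pose proof (pair_eq theta Hpos Hrel l I3) as P3.
  simpl in P1, P2, P3.
  pose proof (Hpos l I1); pose proof (Hpos l I2); pose proof (Hpos l I3).
  pose proof (EE_pos l I1); pose proof (EE_pos l I2); pose proof (EE_pos l I3).
  destruct i.
  - eapply solve3 with (t2 := theta l I2) (t3 := theta l I3); eauto.
  - eapply solve3 with (t2 := theta l I3) (t3 := theta l I1) (e2 := EE l I3) (e3 := EE l I1); eauto;
    try (rewrite P1 || rewrite P2 || rewrite P3); ring.
  - eapply solve3 with (t2 := theta l I1) (t3 := theta l I2) (e2 := EE l I1) (e3 := EE l I2); eauto;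
    try (rewrite P1 || rewrite P2 || rewrite P3); ring.
Qed.

Lemma xcoef_eq (theta : pt -> ix -> R)
  (Hpos : forall l i, 0 < theta l i)
  (Hrel : forall l i,
     exp (l i) / 2 = 2 / (theta l (nxt i) * theta l (prv i))) l i :
  xcoef theta l i = EE l (nxt i) + EE l (prv i) - EE l i.
Proof. unfold xcoef; rewrite !(theta_eq theta Hpos Hrel); field. Qed.

Lemma dl_affexp c d x : derivable_pt_lim (fun t => exp (c * t + d)) x (c * exp (c * x + d)).
Proof.
  assert (H1 : derivable_pt_lim (fun t => c * t + d) x c).
  { apply derivable_pt_lim_ext with (f := plus_fct (mult_real_fct c id) (fct_cte d)).
    - intro; reflexivity.
    - replace c with (c * 1 + 0) at 2 by ring.
      apply derivable_pt_lim_plus.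
      + apply derivable_pt_lim_scal, derivable_pt_lim_id.
      + apply derivable_pt_lim_const. }
  pose proof (derivable_pt_lim_comp _ _ _ _ _ H1 (derivable_pt_lim_exp (c * x + d))) as H.
  rewrite Rmult_comm. exact H.
Qed.

Lemma dl_plus f g x a b : derivable_pt_lim f x a -> derivable_pt_lim g x b ->
  derivable_pt_lim (fun t => f t + g t) x (a + b).
Proof. intros; apply (derivable_pt_lim_plus f g); auto. Qed.
Lemma dl_minus f g x a b : derivable_pt_lim f x a -> derivable_pt_lim g x b ->
  derivable_pt_lim (fun t => f t - g t) x (a - b).
Proof. intros; apply (derivable_pt_lim_minus f g); auto. Qed.
Lemma dl_scal c f x a : derivable_pt_lim f x a ->
  derivable_pt_lim (fun t => c * f t) x (c * a).
Proof. intros; apply (derivable_pt_lim_scal f); auto. Qed.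
Lemma dl_eq f x a b : derivable_pt_lim f x a -> a = b -> derivable_pt_lim f x b.
Proof. intros; subst; auto. Qed.

Lemma hp_plus f g i l a b : has_partial f i l a -> has_partial g i l b ->
  has_partial (fun p => f p + g p) i l (a + b).
Proof. unfold has_partial; intros; apply (dl_plus (fun t => f (upd l i t)) (fun t => g (upd l i t))); auto. Qed.
Lemma hp_minus f g i l a b : has_partial f i l a -> has_partial g i l b ->
  has_partial (fun p => f p - g p) i l (a - b).
Proof. unfold has_partial; intros; apply (dl_minus (fun t => f (upd l i t)) (fun t => g (upd l i t))); auto. Qed.
Lemma hp_scal c f i l a : has_partial f i l a ->
  has_partial (fun p => c * f p) i l (c * a).
Proof. unfold has_partial; intros; apply (dl_scal c (fun t => f (upd l i t))); auto. Qed.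
Lemma hp_const c i l : has_partial (fun _ => c) i l 0.
Proof. unfold has_partial; apply derivable_pt_lim_const. Qed.
Lemma hp_eq f i l a b : has_partial f i l a -> a = b -> has_partial f i l b.
Proof. intros; subst; auto. Qed.

Lemma upd_same (l : pt) j : upd l j (l j) = l.
Proof. apply functional_extensionality; intro m; unfold upd; destruct m, j; reflexivity. Qed.

Lemma hp_E m j l : has_partial (fun p => EE p m) j l (sg m j / 2 * EE l m).
Proof.
  unfold has_partial, EE.
  set (c := sg m j / 2). set (d := aa l m - c * l j).
  apply derivable_pt_lim_ext with (f := fun t => exp (c * t + d)).
  - intro t. f_equal. unfold d, c, aa, upd, sg; destruct m, j; simpl; lra.
  - eapply dl_eq. apply dl_affexp. f_equal. f_equal. unfold d; ring.
Qed.

Definition Fc (c0 c1 c2 c3 : R) (l : pt) : R :=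
  c0 + c1 * EE l I1 + c2 * EE l I2 + c3 * EE l I3.

Lemma hp_Fc c0 c1 c2 c3 i l :
  has_partial (Fc c0 c1 c2 c3) i l
    (Fc 0 (c1 * (sg I1 i / 2)) (c2 * (sg I2 i / 2)) (c3 * (sg I3 i / 2)) l).
Proof.
  unfold Fc. eapply hp_eq.
  - repeat (apply hp_plus || apply hp_scal || apply hp_const || apply hp_E).
  - ring.
Qed.

Lemma exp_cont x0 eps : 0 < eps -> exists alp, 0 < alp /\
  forall x, Rabs (x - x0) < alp -> Rabs (exp x - exp x0) < eps.
Proof.
  intro He.
  assert (C : continuity_pt exp x0).
  { apply derivable_continuous_pt. exists (exp x0). apply derivable_pt_lim_exp. }
  destruct (C eps He) as [alp [Ha Hx]].
  exists alp; split; auto. intros x Hd.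
  destruct (Req_dec x x0) as [->|Hne].
  - rewrite Rminus_diag, Rabs_R0; auto.
  - apply (Hx x). split; [split; [exact I| auto] | exact Hd].
Qed.

Lemma absb x : - Rabs x <= x <= Rabs x.
Proof. pose proof (Rle_abs x); pose proof (Rle_abs (-x)); rewrite Rabs_Ropp in *; lra. Qed.

Lemma cont_E m : continuous3 (fun l => EE l m).
Proof.
  intros l eps He.
  destruct (exp_cont (aa l m) eps He) as [alp [Ha Hx]].
  exists (alp / 2); split; [lra|].
  intros l' Hd. unfold EE. apply Hx.
  unfold dist3 in Hd.
  pose proof (Rmax_l (Rabs (l I1 - l' I1)) (Rmax (Rabs (l I2 - l' I2)) (Rabs (l I3 - l' I3)))).
  pose proof (Rmax_r (Rabs (l I1 - l' I1)) (Rmax (Rabs (l I2 - l' I2)) (Rabs (l I3 - l' I3)))).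
  pose proof (Rmax_l (Rabs (l I2 - l' I2)) (Rabs (l I3 - l' I3))).
  pose proof (Rmax_r (Rabs (l I2 - l' I2)) (Rabs (l I3 - l' I3))).
  pose proof (absb (l I1 - l' I1)); pose proof (absb (l I2 - l' I2)); pose proof (absb (l I3 - l' I3)).
  apply Rabs_def1; destruct m; unfold aa; simpl; lra.
Qed.

Lemma cont_plus f g : continuous3 f -> continuous3 g -> continuous3 (fun l => f l + g l).
Proof.
  intros Hf Hg l eps He.
  destruct (Hf l (eps/2)) as [d1 [Hd1 H1]]; [lra|].
  destruct (Hg l (eps/2)) as [d2 [Hd2 H2]]; [lra|].
  exists (Rmin d1 d2); split; [apply Rmin_pos; auto|].
  intros l' Hd.
  pose proof (H1 l' (Rlt_le_trans _ _ _ Hd (Rmin_l _ _))).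
  pose proof (H2 l' (Rlt_le_trans _ _ _ Hd (Rmin_r _ _))).
  replace (f l' + g l' - (f l + g l)) with ((f l' - f l) + (g l' - g l)) by ring.
  eapply Rle_lt_trans; [apply Rabs_triang|]. lra.
Qed.

Lemma cont_scal c f : continuous3 f -> continuous3 (fun l => c * f l).
Proof.
  intros Hf l eps He.
  pose proof (Rabs_pos c).
  destruct (Hf l (eps / (Rabs c + 1))) as [d [Hd H1]].
  { apply Rdiv_lt_0_compat; lra. }
  exists d; split; auto. intros l' Hl.
  replace (c * f l' - c * f l) with (c * (f l' - f l)) by ring.
  rewrite Rabs_mult.
  pose proof (H1 l' Hl).
  apply Rle_lt_trans with (Rabs c * (eps / (Rabs c + 1))).
  - apply Rmult_le_compat_l; lra.
  - apply Rlt_le_trans with ((Rabs c + 1) * (eps / (Rabs c + 1))).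
    + apply Rmult_lt_compat_r; [apply Rdiv_lt_0_compat|]; lra.
    + right; field; lra.
Qed.

Lemma cont_const c : continuous3 (fun _ => c).
Proof. intros l eps He; exists 1; split; [lra|]; intros; rewrite Rminus_diag, Rabs_R0; auto. Qed.

Lemma cont_Fc c0 c1 c2 c3 : continuous3 (Fc c0 c1 c2 c3).
Proof.
  unfold Fc.
  repeat (apply cont_plus || apply cont_scal || apply cont_const || apply cont_E).
Qed.

Lemma Ck_Fc n : forall c0 c1 c2 c3, Ck n (Fc c0 c1 c2 c3).
Proof.
  induction n; intros; simpl; split; try apply cont_Fc; auto.
  intro i. eexists; split; [intro l; apply hp_Fc | apply IHn].
Qed.

Lemma aa_scale (l : pt) t m : aa (fun j => t * l j) m = t * aa l m.
Proof. destruct m; unfold aa; simpl; field. Qed.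

Definition Gf (A1 A2 A3 : R) (t : R) : R :=
  -2 * (exp (A1 * t + 0) + exp (A2 * t + 0) + exp (A3 * t + 0)).
Definition hf (A1 A2 A3 : R) (t : R) : R :=
  -2 * (A1 * exp (A1 * t + 0) + A2 * exp (A2 * t + 0) + A3 * exp (A3 * t + 0)).

Lemma dG A1 A2 A3 x : derivable_pt_lim (Gf A1 A2 A3) x (hf A1 A2 A3 x).
Proof.
  unfold Gf, hf. apply dl_scal.
  repeat apply dl_plus; apply dl_affexp.
Qed.

Lemma dh A1 A2 A3 x : derivable_pt (hf A1 A2 A3) x.
Proof.
  eexists. unfold hf. apply dl_scal.
  repeat apply dl_plus; apply dl_scal; apply dl_affexp.
Qed.

Definition Gdiff A1 A2 A3 : derivable (Gf A1 A2 A3) :=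
  fun x => exist _ (hf A1 A2 A3 x) (dG A1 A2 A3 x).

Lemma Gcont A1 A2 A3 : continuity (derive (Gf A1 A2 A3) (Gdiff A1 A2 A3)).
Proof.
  intro x. change (continuity_pt (hf A1 A2 A3) x).
  apply derivable_continuous_pt, dh.
Qed.

Definition GC A1 A2 A3 : C1_fun := {| c1 := Gf A1 A2 A3; diff0 := Gdiff A1 A2 A3; cont1 := Gcont A1 A2 A3 |}.

Lemma omega_eq (theta : pt -> ix -> R)
  (Hpos : forall l i, 0 < theta l i)
  (Hrel : forall l i,
     exp (l i) / 2 = 2 / (theta l (nxt i) * theta l (prv i))) l :
  omega_seg theta l = derive (GC (aa l I1) (aa l I2) (aa l I3)) (diff0 (GC (aa l I1) (aa l I2) (aa l I3))).
Proof.
  apply functional_extensionality; intro t.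
  change (omega_seg theta l t = hf (aa l I1) (aa l I2) (aa l I3) t).
  unfold omega_seg, sum3, hf.
  rewrite !(xcoef_eq theta Hpos Hrel). simpl. unfold EE. rewrite !aa_scale.
  rewrite !Rplus_0_r.
  replace (aa l I1 * t) with (t * aa l I1) by ring.
  replace (aa l I2 * t) with (t * aa l I2) by ring.
  replace (aa l I3 * t) with (t * aa l I3) by ring.
  set (e1 := exp (t * aa l I1)). set (e2 := exp (t * aa l I2)). set (e3 := exp (t * aa l I3)).
  unfold aa; simpl. clearbody e1 e2 e3. field.
Qed.

Lemma ftc (G : C1_fun) f (pr : Riemann_integrable f 0 1) :
  f = derive G (diff0 G) -> RiemannInt pr = G 1 - G 0.
Proof. intro E; subst f; apply FTC_Riemann. Qed.

Lemma W_eq (theta : pt -> ix -> R)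
  (Hpos : forall l i, 0 < theta l i)
  (Hrel : forall l i,
     exp (l i) / 2 = 2 / (theta l (nxt i) * theta l (prv i))) :
  Wfun theta = Fc 6 (-2) (-2) (-2).
Proof.
  apply functional_extensionality; intro l.
  unfold Wfun, RInt01.
  destruct (excluded_middle_informative _) as [Hi|Hn].
  - rewrite (ftc _ _ _ (omega_eq theta Hpos Hrel l)).
    simpl. unfold Gf, Fc, EE. rewrite !Rmult_0_r, !Rmult_1_r, !Rplus_0_r, !exp_0. ring.
  - exfalso; apply Hn. constructor. rewrite (omega_eq theta Hpos Hrel l). apply RiemannInt_P32.
Qed.

Lemma conv_exp x y t : 0 < t < 1 ->
  exp ((1 - t) * x + t * y) <= (1 - t) * exp x + t * exp y /\
  (x <> y -> exp ((1 - t) * x + t * y) < (1 - t) * exp x + t * exp y).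
Proof.
  intro Ht. set (z := (1 - t) * x + t * y).
  assert (Ex : exp x = exp z * exp (x - z)) by (rewrite <- exp_plus; f_equal; ring).
  assert (Ey : exp y = exp z * exp (y - z)) by (rewrite <- exp_plus; f_equal; ring).
  pose proof (exp_pos z).
  pose proof (exp_ineq1_le (x - z)). pose proof (exp_ineq1_le (y - z)).
  assert (S0 : (1 - t) * (x - z) + t * (y - z) = 0) by (unfold z; ring).
  rewrite Ex, Ey. split.
  - assert (1 <= (1 - t) * exp (x - z) + t * exp (y - z)) by nra. nra.
  - intro Hxy. assert (x - z <> 0) by (unfold z; intro; apply Hxy; nra).
    pose proof (exp_ineq1 _ H2).
    assert (1 < (1 - t) * exp (x - z) + t * exp (y - z)) by nra. nra.
Qed.

Lemma aa_comb (p q : pt) t m : aa (fun i => (1 - t) * p i + t * q i) m = (1 - t) * aa p m + t * aa q m.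
Proof. destruct m; unfold aa; simpl; field. Qed.

Lemma concave_Fc : strictly_concave3 (Fc 6 (-2) (-2) (-2)).
Proof.
  intros p q t [i Hi] Ht. unfold Fc, EE. rewrite !aa_comb.
  destruct (conv_exp (aa p I1) (aa q I1) t Ht) as [A1 B1].
  destruct (conv_exp (aa p I2) (aa q I2) t Ht) as [A2 B2].
  destruct (conv_exp (aa p I3) (aa q I3) t Ht) as [A3 B3].
  destruct (Req_dec (aa p I1) (aa q I1)) as [E1|N1];
  [destruct (Req_dec (aa p I2) (aa q I2)) as [E2|N2];
   [destruct (Req_dec (aa p I3) (aa q I3)) as [E3|N3]|]|].
  - exfalso. unfold aa in E1, E2, E3; simpl in E1, E2, E3. destruct i; lra.
  - specialize (B3 N3); lra.
  - specialize (B2 N2); lra.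
  - specialize (B1 N1); lra.
Qed.

Definition Hm (l : pt) (i j : ix) : R :=
  sg (nxt i) j / 2 * EE l (nxt i) + sg (prv i) j / 2 * EE l (prv i) - sg i j / 2 * EE l i.

Theorem lemma2p3 (theta : pt -> ix -> R)
  (Hpos : forall l i, 0 < theta l i)
  (Hrel : forall l i,
     exp (l i) / 2 = 2 / (theta l (nxt i) * theta l (prv i))) :
  exists H : pt -> ix -> ix -> R,
    (forall l i j, has_partial (fun p => xcoef theta p i) j l (H l i j)) /\
    (forall l i j, H l i j = H l j i) /\
    (forall l, inhabited (Riemann_integrable (omega_seg theta l) 0 1)) /\
    smooth3 (Wfun theta) /\
    (forall l i, has_partial (Wfun theta) i l (xcoef theta l i)) /\
    (forall l (v : pt), (exists i, v i <> 0) ->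
       sum3 (fun i => sum3 (fun j => v i * v j * H l i j)) < 0) /\
    strictly_concave3 (Wfun theta).
Proof.
  exists Hm.
  rewrite (W_eq theta Hpos Hrel).
  split; [|split; [|split; [|split; [|split; [|split]]]]].
  - intros l i j.
    replace (fun p => xcoef theta p i) with (fun p => EE p (nxt i) + EE p (prv i) - EE p i)
      by (apply functional_extensionality; intro; rewrite (xcoef_eq theta Hpos Hrel); reflexivity).
    unfold Hm. apply hp_minus; [apply hp_plus|]; apply hp_E.
  - intros l i j; destruct i, j; unfold Hm, sg; simpl; lra.
  - intro l. constructor. rewrite (omega_eq theta Hpos Hrel l). apply RiemannInt_P32.
  - intro n; apply Ck_Fc.
  - intros l i. eapply hp_eq; [apply hp_Fc|].
    rewrite (xcoef_eq theta Hpos Hrel). unfold Fc, sg; destruct i; simpl; field.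
  - intros l v [i Hi]. unfold sum3, Hm, sg; simpl.
    pose proof (EE_pos l I1); pose proof (EE_pos l I2); pose proof (EE_pos l I3).
    set (e1 := EE l I1) in *. set (e2 := EE l I2) in *. set (e3 := EE l I3) in *.
    set (w1 := v I1 - v I2 - v I3). set (w2 := v I2 - v I3 - v I1). set (w3 := v I3 - v I1 - v I2).
    match goal with |- ?S < 0 => replace S with (-(1/2) * (e1 * (w1*w1) + e2 * (w2*w2) + e3 * (w3*w3))) end.
    2:{ unfold w1, w2, w3. clearbody e1 e2 e3. field. }
    assert (0 < e1 * (w1*w1) + e2 * (w2*w2) + e3 * (w3*w3)); [|lra].
    destruct (Req_dec w1 0) as [Z1|N1];
    [destruct (Req_dec w2 0) as [Z2|N2];
     [destruct (Req_dec w3 0) as [Z3|N3]|]|].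
    + exfalso. unfold w1, w2, w3 in *. destruct i; lra.
    + pose proof (Rsqr_pos_lt _ N3). unfold Rsqr in *. nra.
    + pose proof (Rsqr_pos_lt _ N2). unfold Rsqr in *. nra.
    + pose proof (Rsqr_pos_lt _ N1). unfold Rsqr in *. nra.
  - apply concave_Fc.
Qed.
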